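(* For every $\alpha\in\{1,\dots,r+1\}$ and every $n\in\mathbb Z$, $$R_{\alpha,n}=\det_{1\le i,j\le \alpha}\bigl(R_{1,\,n+i+j-1-\alpha}\bigr).$$ In particular, since $R_{r+1,n}=1$, one has $\det_{1\le i,j\le r+1}(R_{1,n+i+j-r-2})=1$ for all $n\in\mathbb Z$.
   Context: Fix an integer $r\ge1$ and let $I_r=\{1,\dots,r\}$. Let $R_{1,0},\dots,R_{r,0},R_{1,1},\dots,R_{r,1}$ be $2r$ algebraically independent indeterminates over $\mathbb Q$. The (renormalized) $A_r$ $Q$-system is the unique family $(R_{\alpha,n})_{0\le\alpha\le r+1,\ n\in\mathbb Z}$ of nonzero elements of the field $\mathbb Q(R_{1,0},\dots,R_{r,1})$ with these initial values, $R_{0,n}=R_{r+1,n}=1$ for all $n$, and $$R_{\alpha,n+1}R_{\alpha,n-1}=R_{\alpha,n}^2+R_{\alpha+1,n}R_{\alpha-1,n}\qquad(\alpha\in I_r,\ n\in\mathbb Z),$$ the relation being solved forward and backward in $n$. *)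

(* Defs.v *)
From HB Require Import structures.
From mathcomp Require Import all_boot all_order all_algebra.
From mathcomp Require Import fraction.
Set Implicit Arguments. Unset Strict Implicit. Unset Printing Implicit Defensive.
Import Order.TTheory GRing.Theory Num.Theory.
Local Open Scope ring_scope.

(* mpoly m = Q[x_0, ..., x_{m-1}] built as iterated univariate polynomials. *)
Fixpoint mpoly (m : nat) : idomainType :=
  match m with
  | 0 => rat
  | m'.+1 => ({poly mpoly m'} : idomainType)
  end.

(* mvar m k = the k-th indeterminate x_k of mpoly m (for k < m). *)
Fixpoint mvar (m k : nat) : mpoly m :=
  match m return mpoly m with
  | 0 => 0
  | m'.+1 => if k == m' then ('X : {poly mpoly m'}) else (mvar m' k)%:P
  end.

Definition Qfield (r : nat) : fieldType := {fraction mpoly (2 * r)}.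

Definition qvar (r k : nat) : Qfield r := @FracField.tofrac (mpoly (2 * r)) (mvar (2 * r) k).

Definition is_Qsystem (r : nat) (R : nat -> int -> Qfield r) : Prop :=
  [/\ (forall a : nat, (1 <= a <= r)%N -> R a 0%Z = qvar r a.-1),
      (forall a : nat, (1 <= a <= r)%N -> R a 1%Z = qvar r (r + a.-1)),
      (forall n : int, R 0%N n = 1 /\ R r.+1 n = 1),
      (forall a : nat, forall n : int, (a <= r.+1)%N -> R a n != 0) &
      (forall a : nat, forall n : int, (1 <= a <= r)%N ->
          R a (n + 1) * R a (n - 1) = R a n ^+ 2 + R a.+1 n * R a.-1 n)].

(* Main.v *)
Require Import Defs.
From HB Require Import structures.
From mathcomp Require Import all_boot all_order all_algebra.
From mathcomp Require Import fraction.
From mathcomp Require Import all_fingroup.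
From Stdlib Require Import Lia.
Import Order.TTheory GRing.Theory Num.Theory.
Local Open Scope ring_scope.
Set Implicit Arguments. Unset Strict Implicit.

Definition cycf (m t : nat) : nat := if (t < m)%N then t.+1 else if t == m then 0%N else t.

Lemma cycf_lt N m t : (m < N)%N -> (t < N)%N -> (cycf m t < N)%N.
Proof.
rewrite /cycf => hm ht; case: (ltnP t m) => h1; first exact: (leq_ltn_trans h1 hm).
by case: (t =P m) => // _; apply: leq_ltn_trans hm.
Qed.

Lemma cycf_inj m : injective (cycf m).
Proof.
move=> x y; rewrite /cycf.
case: (ltnP x m) => hx; case: (ltnP y m) => hy; 
case: (x =P m) => ex; case: (y =P m) => ey => //= E; subst;
 move/ssrnat.leP: hx; move/ssrnat.leP: hy; lia.
Qed.

Lemma kaddE k i : (k + i == k)%N = (i == 0)%N.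
Proof. by rewrite -{2}(addn0 k) eqn_add2l. Qed.
Lemma kaddL k i : (k + i < k)%N = false.
Proof. by rewrite ltnNge leq_addr. Qed.

Ltac blk := apply/matrixP; intros i j; rewrite !mxE;
  case: (splitP i); intros i' Hi; rewrite Hi !mxE; case: (splitP j); intros j' Hj; rewrite Hj;
    rewrite !mxE /cycf ?ltn_ord ?kaddL ?kaddE;
    try (case: i' Hi => [[|[|?]] ?] //= Hi); try (case: j' Hj => [[|[|?]] ?] //= Hj);
    rewrite ?addn0 ?mul1n ?addn1 ?mul0n //.

Section DJ.
Variable F : fieldType.

Definition cycp N m (hm : (m < N)%N) : 'S_N.
refine (perm (f := fun t : 'I_N => Ordinal (cycf_lt hm (ltn_ord t))) _).
by move=> x y /(congr1 val) /= /cycf_inj /val_inj.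
Defined.

Lemma cycpE N m (hm : (m < N)%N) (t : 'I_N) : val (cycp hm t) = cycf m t.
Proof. by rewrite /cycp permE. Qed.

Definition hdet N (f : nat -> nat -> F) : F := \det (\matrix_(i < N, j < N) f i j).

Lemma hdet_ext N f g : (forall i j, (i < N)%N -> (j < N)%N -> f i j = g i j) ->
  hdet N f = hdet N g.
Proof.
move=> H; rewrite /hdet; congr (\det _); apply/matrixP => i j; rewrite !mxE.
exact: H.
Qed.

Lemma hdet_perm N f (s : 'S_N) :
  hdet N f = \det (\matrix_(i < N, j < N) f (s i) (s j)).
Proof.
have -> : \matrix_(i < N, j < N) f (s i) (s j) =
   row_perm s (col_perm s (\matrix_(i < N, j < N) f i j)).
  by apply/matrixP => i j; rewrite !mxE.
rewrite row_permE col_permE !det_mulmx !det_perm odd_permV mulrCA mulrA.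
by rewrite -mulrA -expr2 sqrr_sign mulr1.
Qed.

Lemma hdet_colp N f (s : 'S_N) :
  hdet N f = (-1) ^+ s * \det (\matrix_(i < N, j < N) f i (s j)).
Proof.
have -> : \matrix_(i < N, j < N) f i (s j) =
   col_perm s (\matrix_(i < N, j < N) f i j).
  by apply/matrixP => i j; rewrite !mxE.
rewrite col_permE !det_mulmx !det_perm odd_permV mulrCA.
by rewrite -expr2 sqrr_sign mulr1.
Qed.

Lemma hdet_rowp N f (s : 'S_N) :
  hdet N f = (-1) ^+ s * \det (\matrix_(i < N, j < N) f (s i) j).
Proof.
have -> : \matrix_(i < N, j < N) f (s i) j =
   row_perm s (\matrix_(i < N, j < N) f i j).
  by apply/matrixP => i j; rewrite !mxE.
rewrite row_permE !det_mulmx !det_perm mulrA.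
by rewrite -expr2 sqrr_sign mul1r.
Qed.

Lemma schur m n (S : 'M[F]_m) Q R (P : 'M_n) : S \in unitmx ->
  \det (block_mx S Q R P) = \det S * \det (P - R *m invmx S *m Q).
Proof.
move=> hS.
have -> : block_mx S Q R P = block_mx S 0 R 1%:M *m
   block_mx 1%:M (invmx S *m Q) 0 (P - R *m invmx S *m Q).
  rewrite mulmx_block !mulmx0 !mul0mx !mulmx1 !addr0 mul1mx mulmxA mulmxV // mul1mx.
  by rewrite !mulmxA addrC subrK.
by rewrite det_mulmx det_lblock det_ublock !det1 mulr1 mul1r.
Qed.

Lemma det2 (M : 'M[F]_2) : \det M = M 0 0 * M 1 1 - M 0 1 * M 1 0.
Proof.
rewrite (expand_det_row _ 0) !big_ord_recl big_ord0 addr0 /cofactor !det_mx11 /=.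
rewrite !mxE /= expr0 mul1r expr1 mulN1r mulrN.
by congr (_ * M _ _ - M _ _ * M _ _); apply: val_inj.
Qed.


Lemma DJ k (f : nat -> nat -> F) :
  hdet k (fun i j => f i.+1 j.+1) != 0 ->
  hdet k.+2 f * hdet k (fun i j => f i.+1 j.+1) =
  hdet k.+1 (fun i j => f i.+1 j.+1) * hdet k.+1 f
  - hdet k.+1 (fun i j => f i.+1 j) * hdet k.+1 (fun i j => f i j.+1).
Proof.
move=> hS0.
pose S := \matrix_(i < k, j < k) f i.+1 j.+1.
pose Q := \matrix_(i < k, j < 2) f i.+1 (j * k.+1)%N.
pose R := \matrix_(i < 2, j < k) f (i * k.+1)%N j.+1.
pose P := \matrix_(i < 2, j < 2) f (i * k.+1)%N (j * k.+1)%N.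
have hS : S \in unitmx by rewrite unitmxE unitfE.
pose T := P - R *m invmx S *m Q.
have key (a b : 'I_2) : \det (block_mx S (\matrix_(i < k, j < 1) Q i b)
     (\matrix_(i < 1, j < k) R a j) (\matrix_(i < 1, j < 1) P a b)) = \det S * T a b.
  rewrite schur // det_mx11 !mxE; congr (_ * (_ - _)).
  apply: eq_bigr => j _; rewrite !mxE; congr (_ * _).
  by apply: eq_bigr => l _; rewrite !mxE.
have hk2 : (k < k.+2)%N by apply: leqW.
have hk1 : (k < k.+1)%N by [].
have E0 : hdet k.+2 f = \det S * \det T.
  rewrite -schur // (hdet_perm f (cycp hk2)).
  have -> : \det (\matrix_(i < k.+2, j < k.+2) f (cycp hk2 i) (cycp hk2 j)) =
     hdet (k + 2) (fun i j => f (cycf k i) (cycf k j)).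
    rewrite addn2 /hdet; congr (\det _); apply/matrixP => i j; rewrite !mxE.
    by rewrite !cycpE.
  rewrite /hdet; congr (\det _); blk.
have E11 : hdet k.+1 (fun i j => f i.+1 j.+1) = \det S * T 1 1.
  rewrite -key -addn1 /hdet; congr (\det _); blk.
have E00 : hdet k.+1 f = \det S * T 0 0.
  rewrite -key (hdet_perm f (cycp hk1)).
  have -> : \det (\matrix_(i < k.+1, j < k.+1) f (cycp hk1 i) (cycp hk1 j)) =
     hdet (k + 1) (fun i j => f (cycf k i) (cycf k j)).
    rewrite addn1 /hdet; congr (\det _); apply/matrixP => i j; rewrite !mxE.
    by rewrite !cycpE.
  rewrite /hdet; congr (\det _); blk.
have E10 : hdet k.+1 (fun i j => f i.+1 j) = (-1) ^+ (cycp hk1) * (\det S * T 1 0).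
  rewrite -key (hdet_colp _ (cycp hk1)).
  have -> : \det (\matrix_(i < k.+1, j < k.+1) f i.+1 (cycp hk1 j)) =
     hdet (k + 1) (fun i j => f i.+1 (cycf k j)).
    rewrite addn1 /hdet; congr (\det _); apply/matrixP => i j; rewrite !mxE.
    by rewrite !cycpE.
  rewrite /hdet; congr (_ * \det _); blk.
have E01 : hdet k.+1 (fun i j => f i j.+1) = (-1) ^+ (cycp hk1) * (\det S * T 0 1).
  rewrite -key (hdet_rowp _ (cycp hk1)).
  have -> : \det (\matrix_(i < k.+1, j < k.+1) f (cycp hk1 i) j.+1) =
     hdet (k + 1) (fun i j => f (cycf k i) j.+1).
    rewrite addn1 /hdet; congr (\det _); apply/matrixP => i j; rewrite !mxE.
    by rewrite !cycpE.
  rewrite /hdet; congr (_ * \det _); blk.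
rewrite E0 E11 E00 E10 E01 det2.
change (hdet k _) with (\det S).
move: (\det S) (T 0 0) (T 0 1) (T 1 0) (T 1 1) ((-1) ^+ cycp hk1 : F) (sqrr_sign F (cycp hk1)) => x a b c d sg.
rewrite expr2 => h.
rewrite (mulrACA sg) h mul1r mulrBr mulrBl (mulrAC x (a*d)) (mulrAC x (b*c)).
by rewrite (mulrACA x d) (mulrACA x c) (mulrC d) (mulrC c).
Qed.

End DJ.


Lemma zsub (a b a' b' : nat) :
  (a + b' = a' + b)%N -> a%:Z - b%:Z = a'%:Z - b'%:Z.
Proof.
move=> H; apply/eqP; rewrite subr_eq addrAC eq_sym subr_eq -!PoszD H.
by rewrite addnC.
Qed.

Lemma zeq (n : int) (a b a' b' : nat) :
  (a + b' = a' + b)%N -> n + a%:Z - 1 - b%:Z = n + a'%:Z - 1 - b'%:Z.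
Proof.
move=> H; rewrite !(addrAC _ (-1)) -!(addrA n) (zsub H) //.
Qed.

Lemma zeqP (n : int) (a b a' b' : nat) :
  (a + b' = a' + b + 1)%N -> n + a%:Z - 1 - b%:Z = (n + 1) + a'%:Z - 1 - b'%:Z.
Proof.
move=> H; rewrite -(addrA n 1) -(PoszD 1); apply: zeq; rewrite H.
by rewrite addnAC add1n addn1.
Qed.

Lemma zeqM (n : int) (a b a' b' : nat) :
  (a + b' + 1 = a' + b)%N -> n + a%:Z - 1 - b%:Z = (n - 1) + a'%:Z - 1 - b'%:Z.
Proof.
move=> H; rewrite (addrAC n (-1)) -(addrA _ (-1) (- b'%:Z)) -opprD -(PoszD 1).
by apply: zeq; rewrite -H add1n addn1 addnS.
Qed.

Lemma zlast (n : int) (x r : nat) : n + x%:Z - r%:Z - 2 = n + x%:Z - 1 - (r.+1)%:Z.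
Proof.
rewrite -(addn1 r) PoszD -!addrA; congr (_ + (_ + _)).
by rewrite opprD addrCA -opprD.
Qed.

Theorem mainTheorem1 (r : nat) (r_ge1 : (1 <= r)%N)
    (R : nat -> int -> Qfield r) (HR : is_Qsystem R) :
  (forall (alpha : nat) (n : int), (1 <= alpha <= r.+1)%N ->
    R alpha n =
      \det (\matrix_(i < alpha, j < alpha)
              R 1%N (n + (i.+1 + j.+1)%N%:Z - 1 - alpha%:Z)))
  /\
  (forall n : int,
    \det (\matrix_(i < r.+1, j < r.+1)
            R 1%N (n + (i.+1 + j.+1)%N%:Z - r%:Z - 2)) = 1).
Proof.
case: HR => H0 H1 Hb Hnz Hrec.
pose D a n := hdet a (fun i j => R 1%N (n + (i.+1 + j.+1)%N%:Z - 1 - a%:Z)).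
have key : forall a, (a < r.+1)%N -> (forall n, R a n = D a n) /\ (forall n, R a.+1 n = D a.+1 n).
  elim=> [_|a IH ha].
    split=> n.
      by rewrite /D /hdet det_mx00; case: (Hb n).
    rewrite /D /hdet det_mx11 !mxE /=.
    by rewrite PoszD addrA !addrK.
  have [IH0 IH1] := IH (ltnW ha).
  split=> // n.
  have hne : D a n != 0 by rewrite -IH0; apply: Hnz; apply: ltnW; apply: ltnW.
  have := @DJ _ a (fun i j => R 1%N (n + (i.+1 + j.+1)%N%:Z - 1 - (a.+2)%:Z)).
  have -> : hdet a (fun i j => R 1%N (n + (i.+2 + j.+2)%N%:Z - 1 - (a.+2)%:Z)) = D a n.
    apply: hdet_ext => i j _ _; congr (R _ _); apply: zeq.
    by rewrite -!plusE; lia.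
  have -> : hdet a.+1 (fun i j => R 1%N (n + (i.+2 + j.+2)%N%:Z - 1 - (a.+2)%:Z)) = D a.+1 (n + 1).
    apply: hdet_ext => i j _ _; congr (R _ _); apply: zeqP.
    by rewrite -!plusE; lia.
  have -> : hdet a.+1 (fun i j => R 1%N (n + (i.+1 + j.+1)%N%:Z - 1 - (a.+2)%:Z)) = D a.+1 (n - 1).
    apply: hdet_ext => i j _ _; congr (R _ _); apply: zeqM.
    by rewrite -!plusE; lia.
  have -> : hdet a.+1 (fun i j => R 1%N (n + (i.+2 + j.+1)%N%:Z - 1 - (a.+2)%:Z)) = D a.+1 n.
    apply: hdet_ext => i j _ _; congr (R _ _); apply: zeq.
    by rewrite -!plusE; lia.
  have -> : hdet a.+1 (fun i j => R 1%N (n + (i.+1 + j.+2)%N%:Z - 1 - (a.+2)%:Z)) = D a.+1 n.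
    apply: hdet_ext => i j _ _; congr (R _ _); apply: zeq.
    by rewrite -!plusE; lia.
  move/(_ hne) => E.
  apply: (mulIf hne); rewrite E -!IH1 -IH0.
  move: (Hrec a.+1 n) => /(_ ha) ->.
  by rewrite expr2 (addrC (_ * _)) addrK.
have part1 : forall alpha n, (1 <= alpha <= r.+1)%N -> R alpha n = D alpha n.
  move=> [|a] n // /andP [_ ha].
  by case: (key a ha) => _ ->.
split=> // n.
have -> : \det (\matrix_(i < r.+1, j < r.+1)
            R 1%N (n + (i.+1 + j.+1)%N%:Z - r%:Z - 2)) = D r.+1 n.
  rewrite /D /hdet; congr (\det _); apply/matrixP => i j; rewrite !mxE.
  by rewrite zlast.
rewrite -(part1 r.+1 n) ?leqnn //; by case: (Hb n).
Qed.
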